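(* Let $G=(V,E)$ be a finite undirected graph with $V=\{1,\dots,n\}$ and let $H=(V,E')$ be a subgraph of $G$ with the same vertex set, i.e. $E'\subseteq E$. Then $A_H$ is positive definite for every $A\in\mathbb{P}_G$ if and only if $H=G_1\cup\dots\cup G_k$, where $G_1,\dots,G_k$ are induced subgraphs of $G$ that are pairwise disconnected in $H$ (i.e. the vertex sets of the $G_i$ partition $V$, each $G_i$ is the subgraph of $G$ induced by its vertex set, and $H$ has no edge between distinct $G_i$).
   Context: For a symmetric $n\times n$ real matrix $A=(a_{ij})$ and an undirected graph $K=(V,F)$ on $V=\{1,\dots,n\}$, the thresholded matrix $A_K$ is defined by $(A_K)_{ij}=a_{ij}$ if $i=j$ or $(i,j)\in F$, and $(A_K)_{ij}=0$ otherwise. $\mathbb{P}_G$ denotes the set of symmetric positive definite $n\times n$ real matrices $A$ with $a_{ij}=0$ whenever $i\neq j$ and $(i,j)\notin E$. *)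

(* Defs.v *)
From HB Require Import structures.
From mathcomp Require Import all_boot all_order all_algebra.
From mathcomp Require Import reals.
Set Implicit Arguments. Unset Strict Implicit. Unset Printing Implicit Defensive.
Import Order.TTheory GRing.Theory Num.Theory.
Local Open Scope ring_scope.

Definition simple_graph (n : nat) (E : rel 'I_n) : Prop :=
  symmetric E /\ irreflexive E.

Definition posdef (R : realType) (n : nat) (A : 'M[R]_n) : Prop :=
  A^T = A /\ forall x : 'cV[R]_n, x != 0 -> 0 < (x^T *m A *m x) ord0 ord0.

Definition thresh (R : realType) (n : nat) (K : rel 'I_n) (A : 'M[R]_n) : 'M[R]_n :=
  \matrix_(i, j) (if (i == j) || K i j then A i j else 0).

Definition in_PG (R : realType) (n : nat) (G : rel 'I_n) (A : 'M[R]_n) : Prop :=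
  posdef A /\ forall i j : 'I_n, i != j -> ~~ G i j -> A i j = 0.

(* Main.v *)
Require Import Defs.
From HB Require Import structures.
From mathcomp Require Import all_boot all_order all_algebra.
From mathcomp Require Import reals.
From mathcomp Require Import ring lra.
Import Order.TTheory GRing.Theory Num.Theory.
Local Open Scope ring_scope.

Definition qf (R : realType) n (a : 'I_n -> 'I_n -> R) (x : 'I_n -> R) :=
  \sum_u \sum_v x u * a u v * x v.
Arguments qf {R n} a x.

Lemma qformE (R : realType) n (A : 'M[R]_n) (x : 'cV[R]_n) :
  (x^T *m A *m x) ord0 ord0 = qf (fun u v => A u v) (fun u => x u ord0).
Proof.
rewrite /qf mxE.
under eq_bigr => v _ do rewrite mxE big_distrl /=.
rewrite exchange_big /=; apply: eq_bigr => u _; apply: eq_bigr => v _.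
by rewrite !mxE.
Qed.

Lemma sum_delta (R : realType) n (i : 'I_n) (f : 'I_n -> R) :
  \sum_u (u == i)%:R * f u = f i.
Proof.
rewrite (bigD1 i) //= eqxx mul1r big1 ?addr0 // => u /negbTE ->; by rewrite mul0r.
Qed.

Arguments sum_delta {R n} i f.

Lemma sum_ge_term (R : realType) n (F : 'I_n -> R) (u : 'I_n) :
  (forall v, 0 <= F v) -> F u <= \sum_v F v.
Proof.
move=> F0; rewrite (bigD1 u) //= lerDl; exact: sumr_ge0.
Qed.

Definition Lap (R : realType) n (H : rel 'I_n) (x : 'I_n -> R) :=
  \sum_a \sum_b (H a b)%:R * (x a - x b) ^+ 2.
Arguments Lap {R n} H x.

Lemma Lap_ge0 (R : realType) n (H : rel 'I_n) (x : 'I_n -> R) : 0 <= Lap H x.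
Proof.
apply: sumr_ge0 => a _; apply: sumr_ge0 => b _; apply: mulr_ge0 => //; exact: sqr_ge0.
Qed.

Lemma Lap_edge (R : realType) n (H : rel 'I_n) (x : 'I_n -> R) a b :
  H a b -> (x a - x b) ^+ 2 <= Lap H x.
Proof.
move=> Hab; rewrite /Lap.
have h1 := @sum_ge_term _ _ (fun a0 => \sum_b0 (H a0 b0)%:R * (x a0 - x b0) ^+ 2) a.
have h2 := @sum_ge_term _ _ (fun b0 => (H a b0)%:R * (x a - x b0) ^+ 2) b.
apply: le_trans (h1 _); last first.
  move=> v; apply: sumr_ge0 => w _; apply: mulr_ge0 => //; exact: sqr_ge0.
apply: le_trans (h2 _); last first.
  move=> w; apply: mulr_ge0 => //; exact: sqr_ge0.
by rewrite Hab mul1r.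
Qed.

Lemma conn_bound (R : realType) n (H : rel 'I_n) (i u : 'I_n) :
  connect H i u -> exists K : R, 0 <= K /\
    forall x : 'I_n -> R, (x i - x u) ^+ 2 <= K * Lap H x.
Proof.
move/connectP => [p pth ->] {u}.
elim: p i pth => [|w p IH] i /=.
  by move=> _; exists 0; split => // x; rewrite subrr expr0n /= mul0r.
move=> /andP[Hiw pw]; have [K [K0 HK]] := IH w pw.
exists (2 + 2 * K); split; first lra.
move=> x; have h1 := @Lap_edge _ _ H x _ _ Hiw; have h2 := HK x; have l0 := @Lap_ge0 _ _ H x.
set L := Lap H x in h1 h2 l0 *.
have e : (x i - x (last w p)) ^+ 2 <= 2 * (x i - x w) ^+ 2 + 2 * (x w - x (last w p)) ^+ 2.
  have := sqr_ge0 ((x i - x w) - (x w - x (last w p))).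
  move=> h; nra.
nra.
Qed.

Definition deg (R : realType) n (H : rel 'I_n) (u : 'I_n) : R := \sum_v (H u v)%:R.
Arguments deg {R n} H u.

Lemma qf_B (R : realType) n (H : rel 'I_n) (d x : 'I_n -> R) : symmetric H ->
  qf (fun u v => (u == v)%:R * (2 * deg H u + d u) - 2 * (H u v)%:R) x
  = Lap H x + \sum_u d u * x u ^+ 2.
Proof.
move=> Hsym.
have eL : Lap H x = 2 * \sum_u deg H u * x u ^+ 2
                    - 2 * \sum_u \sum_v (H u v)%:R * x u * x v.
  have e1 : Lap H x = \sum_u \sum_v (H u v)%:R * x u ^+ 2
      + \sum_u \sum_v (H u v)%:R * x v ^+ 2
      - 2 * \sum_u \sum_v (H u v)%:R * x u * x v.
    rewrite /Lap mulr_sumr -big_split -sumrB /=; apply: eq_bigr => u _.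
    rewrite mulr_sumr -big_split -sumrB /=; apply: eq_bigr => v _; ring.
  have e2 : \sum_u \sum_v (H u v)%:R * x v ^+ 2
          = \sum_u \sum_v (H u v)%:R * x u ^+ 2 :> R.
    rewrite exchange_big; apply: eq_bigr => u _; apply: eq_bigr => v _.
    by rewrite Hsym.
  have e3 : \sum_u \sum_v (H u v)%:R * x u ^+ 2 = \sum_u deg H u * x u ^+ 2 :> R.
    by apply: eq_bigr => u _; rewrite /deg mulr_suml.
  rewrite e1 e2 e3; ring.
have eQ : qf (fun u v => (u == v)%:R * (2 * deg H u + d u) - 2 * (H u v)%:R) x
    = \sum_u (2 * deg H u + d u) * x u ^+ 2
      - 2 * \sum_u \sum_v (H u v)%:R * x u * x v.
  rewrite /qf mulr_sumr -sumrB; apply: eq_bigr => u _.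
  have -> : \sum_v x u * ((u == v)%:R * (2 * deg H u + d u) - 2 * (H u v)%:R) * x v
     = \sum_v ((v == u)%:R * (x u * (2 * deg H u + d u) * x v)
               - 2 * ((H u v)%:R * x u * x v)).
    by apply: eq_bigr => v _; rewrite (eq_sym v u); ring.
  rewrite sumrB (sum_delta u (fun v => x u * (2 * deg H u + d u) * x v)) -mulr_sumr.
  ring.
rewrite eQ eL.
have -> : \sum_u (2 * deg H u + d u) * x u ^+ 2
   = 2 * \sum_u deg H u * x u ^+ 2 + \sum_u d u * x u ^+ 2.
  by rewrite mulr_sumr -big_split /=; apply: eq_bigr => u _; ring.
ring.
Qed.

Lemma qf_E (R : realType) n (i j : 'I_n) (x : 'I_n -> R) : i != j ->
  qf (fun u v => (((u == i) && (v == j)) || ((u == j) && (v == i)))%:R) x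
  = 2 * x i * x j.
Proof.
move=> ij.
have key : forall u v : 'I_n,
  (((u == i) && (v == j)) || ((u == j) && (v == i)))%:R
  = (u == i)%:R * (v == j)%:R + (u == j)%:R * (v == i)%:R :> R.
  move=> u v.
  have h1 : ~~ ((u == i) && (u == j)).
    by apply/negP => /andP[/eqP e1 /eqP e2]; move: ij; rewrite -e1 -e2 eqxx.
  have h2 : ~~ ((v == j) && (v == i)).
    by apply/negP => /andP[/eqP e1 /eqP e2]; move: ij; rewrite -e1 -e2 eqxx.
  move: h1 h2; case: (u == i); case: (v == j); case: (u == j); case: (v == i);
    move=> //= _ _; ring.
rewrite /qf.
have -> : \sum_u \sum_v x u * (((u == i) && (v == j)) || ((u == j) && (v == i)))%:R * x v
   = \sum_u ((u == i)%:R * (x u * x j) + (u == j)%:R * (x u * x i)).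
  apply: eq_bigr => u _.
  have -> : \sum_v x u * (((u == i) && (v == j)) || ((u == j) && (v == i)))%:R * x v
     = \sum_v ((v == j)%:R * ((u == i)%:R * x u * x v) + (v == i)%:R * ((u == j)%:R * x u * x v)).
    by apply: eq_bigr => v _; rewrite key; ring.
  rewrite big_split /= (sum_delta j (fun v => (u == i)%:R * x u * x v))
      (sum_delta i (fun v => (u == j)%:R * x u * x v)); ring.
rewrite big_split /= (sum_delta i (fun u => x u * x j)) (sum_delta j (fun u => x u * x i)).
ring.
Qed.

Lemma qf_add (R : realType) n (a a' : 'I_n -> 'I_n -> R) (c : R) (x : 'I_n -> R) :
  qf (fun u v => a u v + c * a' u v) x = qf a x + c * qf a' x.
Proof.
rewrite /qf mulr_sumr -big_split; apply: eq_bigr => u _.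
rewrite mulr_sumr -big_split; apply: eq_bigr => v _; rewrite /=; ring.
Qed.

Lemma nonzero_entry (R : realType) n (x : 'cV[R]_n) : x != 0 ->
  exists u, x u ord0 != 0.
Proof.
move=> x0; case: (pickP (fun u => x u ord0 != 0)) => [u0 hu0|hnone]; first by exists u0.
case/negP: x0; apply/eqP/matrixP => u k; rewrite mxE (ord1 k).
by have /negbFE/eqP := hnone u.
Qed.

Lemma counter (R : realType) n (G H : rel 'I_n) (i j : 'I_n) :
  symmetric G -> irreflexive G -> symmetric H -> subrel H G ->
  G i j -> ~~ H i j -> connect H i j ->
  exists A : 'M[R]_n, in_PG G A /\ ~ posdef (thresh H A).
Proof.
move=> Gsym Girr Hsym HG Gij nHij cij.
have ij : i != j by apply/negP => /eqP e; move: Gij; rewrite e Girr.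
have [C HC] : {C : {set 'I_n} | forall u, (u \in C) = connect H i u}.
  by exists [set u | connect H i u] => u; rewrite inE.
have memC : forall a b, H a b -> (a \in C) = (b \in C).
  move=> a b Hab; rewrite !HC; apply/idP/idP => h.
    exact: connect_trans h (connect1 Hab).
  by apply: connect_trans h (connect1 _); rewrite Hsym.
have [K [K0 HK]] := conn_bound R _ H i j cij.
pose c : R := (K + 1)^-1.
have c0 : 0 < c by rewrite invr_gt0; lra.
have cK : c * (K + 1) = 1 by rewrite mulVf //; apply/eqP => h; lra.
pose d u : R := (u \notin C)%:R.
pose b u v : R := (u == v)%:R * (2 * deg H u + d u) - 2 * (H u v)%:R.
pose e u v : R := (((u == i) && (v == j)) || ((u == j) && (v == i)))%:R.
have eii : forall u, e u u = 0.
  move=> u; rewrite /e.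
  have -> : ((u == i) && (u == j)) = false.
    by apply/negP => /andP[/eqP e1 /eqP e2]; move: ij; rewrite -e1 -e2 eqxx.
  have -> : ((u == j) && (u == i)) = false.
    by apply/negP => /andP[/eqP e1 /eqP e2]; move: ij; rewrite -e1 -e2 eqxx.
  by [].
pose A : 'M[R]_n := \matrix_(u, v) (b u v + c * e u v).
have qA : forall x : 'cV[R]_n,
    (x^T *m A *m x) ord0 ord0 = Lap H (fun u => x u ord0)
       + \sum_u d u * x u ord0 ^+ 2 + c * (2 * x i ord0 * x j ord0).
  move=> x; rewrite qformE.
  have -> : qf (fun u v => A u v) (fun u => x u ord0)
          = qf (fun u v => b u v + c * e u v) (fun u => x u ord0).
    by apply: eq_bigr => u _; apply: eq_bigr => v _; rewrite mxE.
  by rewrite qf_add qf_B // qf_E.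
exists A; split.
- split; [split|].
  + apply/matrixP => u v; rewrite !mxE /b /e (eq_sym v u) (Hsym v u).
    rewrite orbC (andbC (v == j)) (andbC (v == i)).
    by have [->|uv] := eqVneq u v; rewrite ?mul0r.
  + move=> x x0; rewrite qA.
    set xf := fun u => x u ord0.
    have L0 := Lap_ge0 R n H xf.
    have S0 : 0 <= \sum_u d u * xf u ^+ 2.
      by apply: sumr_ge0 => u _; apply: mulr_ge0 => //; exact: sqr_ge0.
    set L := Lap H xf in L0 *; set S := \sum_u d u * xf u ^+ 2 in S0 *.
    have hD := HK xf; rewrite -/L in hD.
    have cKL : c * K * L <= L.
      have : 0 <= (1 - c * K) * L by apply: mulr_ge0 => //; nra.
      nra.
    have cD : c * (xf i - xf j) ^+ 2 <= c * K * L.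
      by rewrite -mulrA ler_wpM2l // ltW.
    have low : L / 2 + S + c / 2 * (xf i + xf j) ^+ 2
               <= L + S + c * (2 * xf i * xf j).
      have idt : c * (2 * xf i * xf j)
          = c / 2 * (xf i + xf j) ^+ 2 - c / 2 * (xf i - xf j) ^+ 2.
        by field.
      rewrite idt; lra.
    apply: lt_le_trans low.
    have [u0 hu0] := @nonzero_entry _ _ x x0.
    have cs0 : 0 <= c / 2 * (xf i + xf j) ^+ 2.
      by apply: mulr_ge0; [lra | exact: sqr_ge0].
    case: (boolP (u0 \in C)) => u0C; last first.
      have : d u0 * xf u0 ^+ 2 <= S.
        apply: (@sum_ge_term _ _ (fun u => d u * xf u ^+ 2)) => u.
        by apply: mulr_ge0 => //; exact: sqr_ge0.
      rewrite /d u0C mul1r => hS.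
      have : 0 < xf u0 ^+ 2 by rewrite exprn_even_gt0 // hu0 orbT.
      lra.
    have [Lpos|Lle] := ltP 0 L; first lra.
    have L00 : L = 0 by apply: le_anti; rewrite Lle L0.
    have cu0 : connect H i u0 by move: u0C; rewrite HC.
    have [K' [K'0 HK']] := conn_bound R _ H i u0 cu0.
    have sq0 : forall a : R, a ^+ 2 <= 0 -> a = 0.
      by move=> a ha; apply/eqP; rewrite -sqrf_eq0; apply/eqP/le_anti; rewrite ha sqr_ge0.
    have e1 : xf i = xf u0.
      apply/eqP; rewrite -subr_eq0; apply/eqP/sq0.
      by have := HK' xf; rewrite -/L L00 mulr0.
    have e2 : xf i = xf j.
      apply/eqP; rewrite -subr_eq0; apply/eqP/sq0.
      by move: hD; rewrite L00 mulr0.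
    rewrite -e2 e1.
    have : 0 < xf u0 ^+ 2 by rewrite exprn_even_gt0 // hu0 orbT.
    nra.
  + move=> u v uv nG; rewrite mxE /b /e (negbTE uv).
    have -> : H u v = false by apply/negbTE/negP => /HG; rewrite (negbTE nG).
    have -> : ((u == i) && (v == j)) || ((u == j) && (v == i)) = false.
      apply/negP => /orP [/andP[/eqP eu /eqP ev] | /andP[/eqP eu /eqP ev]].
        by move: nG; rewrite eu ev Gij.
      by move: nG; rewrite eu ev Gsym Gij.
    rewrite /=; ring.
- move=> [_ PD].
  have f0 : (false%:R : R) = 0 by [].
  pose x : 'cV[R]_n := \col_u (u \in C)%:R.
  have x0 : x != 0.
    apply/negP => /eqP/matrixP/(_ i ord0); rewrite !mxE HC connect0 => /eqP.
    by rewrite oner_eq0.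
  have := PD x x0; rewrite qformE.
  have -> : qf (fun u v => thresh H A u v) (fun u => x u ord0)
          = qf b (fun u => x u ord0).
    apply: eq_bigr => u _; apply: eq_bigr => v _; rewrite !mxE.
    have [<-|uv] := eqVneq u v; first by rewrite orTb eii mulr0 addr0.
    rewrite orFb; case Huv: (H u v).
      have eq0 : e u v = 0.
        rewrite /e; suff -> : ((u == i) && (v == j)) || ((u == j) && (v == i)) = false by [].
        apply/negP => /orP [/andP[/eqP eu /eqP ev] | /andP[/eqP eu /eqP ev]].
          by move: Huv nHij; rewrite eu ev => ->.
        by move: Huv nHij; rewrite eu ev Hsym => ->.
      by rewrite eq0 mulr0 addr0.
    have b0 : b u v = 0 by rewrite /b (negbTE uv) Huv f0 mul0r mulr0 subr0.
    by rewrite b0 mulr0.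
  rewrite qf_B //.
  have -> : Lap H (fun u => x u ord0) = 0.
    apply: big1 => a _; apply: big1 => b' _.
    case Hab: (H a b'); last by rewrite f0 mul0r.
    by rewrite !mxE (memC _ _ Hab) subrr expr2 mul0r mulr0.
  have -> : \sum_u d u * x u ord0 ^+ 2 = 0.
    apply: big1 => u _; rewrite mxE /d.
    case: (u \in C); first by rewrite f0 mul0r.
    by rewrite expr2 f0 !mulr0.
  by rewrite addr0 ltxx.
Qed.

Lemma samebP n (P : {set {set 'I_n}}) (u v : 'I_n) :
  partition P [set: 'I_n] ->
  [exists B in P, (u \in B) && (v \in B)] = (v \in pblock P u).
Proof.
move=> /and3P[covP tiP _].
have inC : forall w, w \in cover P by move=> w; rewrite (eqP covP) inE.
apply/existsP/idP.
  by move=> [B /andP[PB /andP[uB vB]]]; rewrite (def_pblock tiP PB uB).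
move=> h; exists (pblock P u); by rewrite pblock_mem ?inC //= mem_pblock inC h.
Qed.

Lemma converse (R : realType) n (G H : rel 'I_n) (P : {set {set 'I_n}}) (A : 'M[R]_n) :
  symmetric H -> partition P [set: 'I_n] ->
  (forall i j : 'I_n, H i j = G i j && [exists B in P, (i \in B) && (j \in B)]) ->
  in_PG G A -> posdef (thresh H A).
Proof.
move=> Hsym partP prop [[AT PDA] A0].
have /and3P[covP tiP _] := partP.
have inC : forall w, w \in cover P by move=> w; rewrite (eqP covP) inE.
have Asym : forall u v, A v u = A u v by move=> u v; rewrite -{1}AT mxE.
have Tent : forall u v, thresh H A u v = A u v * (v \in pblock P u)%:R.
  move=> u v; rewrite mxE.
  have [<-|uv] := eqVneq u v; first by rewrite orTb mem_pblock inC mulr1.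
  rewrite orFb prop (@samebP _ P u v partP).
  case: (boolP (v \in pblock P u)) => h; last by rewrite andbF mulr0.
  rewrite andbT mulr1; case Guv: (G u v) => //.
  by rewrite A0 // Guv.
have sumblk : forall u v : 'I_n,
    \sum_(B in P) (u \in B)%:R * (v \in B)%:R = (v \in pblock P u)%:R :> R.
  move=> u v; rewrite (bigD1 (pblock P u)) ?pblock_mem ?inC //= mem_pblock inC mul1r.
  rewrite big1 ?addr0 // => B /andP[PB nB].
  case: (boolP (u \in B)) => uB; last by rewrite mul0r.
  by move: nB; rewrite (def_pblock tiP PB uB) eqxx.
have form_ge0 : forall y : 'cV[R]_n, 0 <= (y^T *m A *m y) ord0 ord0.
  move=> y; have [->|y0] := eqVneq y 0; last exact/ltW/PDA.
  by rewrite mulmx0 mxE.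
split.
  apply/matrixP => u v; rewrite !mxE (eq_sym v u) (Hsym v u) Asym.
  by [].
move=> x x0; rewrite qformE.
pose col (B : {set 'I_n}) : 'cV[R]_n := \col_u ((u \in B)%:R * x u ord0).
have ident : qf (fun u v => thresh H A u v) (fun u => x u ord0)
     = \sum_(B in P) ((col B)^T *m A *m col B) ord0 ord0.
  under [RHS]eq_bigr => B _ do rewrite qformE.
  rewrite /qf [RHS]exchange_big; apply: eq_bigr => u _.
  rewrite [RHS]exchange_big; apply: eq_bigr => v _.
  rewrite Tent -sumblk !mulr_sumr mulr_suml; apply: eq_bigr => B _.
  rewrite !mxE; ring.
rewrite ident.
have [u0 hu0] := @nonzero_entry _ _ x x0.
have PB0 : pblock P u0 \in P by rewrite pblock_mem ?inC.
rewrite (bigD1 (pblock P u0)) //=.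
have pos : 0 < ((col (pblock P u0))^T *m A *m col (pblock P u0)) ord0 ord0.
  apply: PDA; apply/negP => /eqP/matrixP/(_ u0 ord0).
  by rewrite !mxE mem_pblock inC mul1r => /eqP; rewrite (negbTE hu0).
apply: (lt_le_trans pos); rewrite lerDl.
by apply: sumr_ge0 => B _; apply: form_ge0.
Qed.


Theorem theorem4 (R : realType) (n : nat) (G H : rel 'I_n) :
  simple_graph G -> simple_graph H -> subrel H G ->
  (forall A : 'M[R]_n, in_PG G A -> posdef (thresh H A)) <->
  (exists P : {set {set 'I_n}},
      partition P [set: 'I_n] /\
      forall i j : 'I_n,
        H i j = G i j && [exists B in P, (i \in B) && (j \in B)]).
Proof.
move=> [Gsym Girr] [Hsym Hirr] HG; split; last first.
  by move=> [P [partP prop]] A inA; exact: (@converse R n G H P A Hsym partP prop inA).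
move=> hyp.
have eqR : {in [set: 'I_n] & &, equivalence_rel (connect H)}.
  move=> x y z _ _ _; split; first exact: connect0.
  by move=> cxy; rewrite (same_connect (sym_connect_sym Hsym) cxy).
pose P := equivalence_partition (connect H) [set: 'I_n].
have partP : partition P [set: 'I_n] := equivalence_partitionP eqR.
exists P; split => // i j.
have same : [exists B in P, (i \in B) && (j \in B)] = connect H i j.
  by rewrite (@samebP _ P i j partP) (pblock_equivalence_partition eqR) ?inE.
rewrite same.
case Hij: (H i j); first by rewrite (HG _ _ Hij) (connect1 Hij).
case Gij: (G i j) => //=.
apply/esym/negbTE/negP => cij.
have [A [inA nPD]] := counter R n G H i j Gsym Girr Hsym HG Gij (negbT Hij) cij.
exact: nPD (hyp A inA).
Qed.
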